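(* Let $k\ge2$ be an integer and $n\in\mathbb Z$, and suppose that $H=(L_k^{(0)})^2$ is invertible (over $\mathbb Q$). Then $L_k^{(n)}$ is invertible and its inverse is $L_k^{(-n)}H^{-1}$.
   Context: Fix an integer $k\ge2$. Let $Q_k$ be the $k\times k$ matrix whose first row is all ones, with $(Q_k)_{i+1,i}=1$ for $1\le i\le k-1$ and all other entries $0$, and for $r\in\mathbb Z$ let $Q_k^r$ denote its $r$-th power. The generalized Lucas sequence of order $k$, $(l_{k,n})_{n\in\mathbb Z}$, is the two-sided sequence satisfying $l_{k,n+k}=l_{k,n+k-1}+\dots+l_{k,n}$ for all $n\in\mathbb Z$ with initial values $l_{k,r}=\operatorname{trace}(Q_k^r)$ for $0\le r\le k-1$ (so $l_{k,0}=k$ and $l_{k,r}=2^r-1$ for $1\le r\le k-1$). For $n\in\mathbb Z$ the generalized Lucas matrix $L_k^{(n)}$ is the $k\times k$ matrix with entries $(L_k^{(n)})_{i,1}=l_{k,k+n-i}$ and $(L_k^{(n)})_{i,j}=\sum_{m=n-i+j-1}^{k+n-i-1} l_{k,m}$ for $2\le j\le k$, $1\le i\le k$. *)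

(* Defs.v *)
From HB Require Import structures.
From mathcomp Require Import all_boot all_order all_algebra.
Set Implicit Arguments. Unset Strict Implicit. Unset Printing Implicit Defensive.
Import Order.TTheory GRing.Theory Num.Theory.
Local Open Scope ring_scope.

Definition Qk (k : nat) : 'M[int]_k :=
  \matrix_(i < k, j < k) (if (i == 0%N :> nat) || (i == j.+1 :> nat) then 1 else 0).

(* l : Z -> Z is the generalized Lucas sequence of order k: it satisfies
   l_{n+k} = l_{n+k-1} + ... + l_n for all n in Z, and l_r = trace(Q_k^r) for 0 <= r <= k-1.
   (Such a two-sided sequence exists and is unique.) *)
Definition is_gen_lucas (k : nat) (l : int -> int) : Prop :=
  (forall n : int, l (n + k%:Z) = \sum_(t < k) l (n + t%:Z)) /\
  (forall r : nat, (r < k)%N -> l r%:Z = \tr (Qk k ^+ r)).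

(* The generalized Lucas matrix L_k^{(n)} (0-indexed i, j; paper's indices are i+1, j+1):
   (L)_{i,1} = l_{k+n-i}, and for 2 <= j <= k,
   (L)_{i,j} = sum_{m = n-i+j-1}^{k+n-i-1} l_m  (k - j + 1 terms). *)
Definition lucas_mx (k : nat) (l : int -> int) (n : int) : 'M[rat]_k :=
  \matrix_(i < k, j < k)
    (if j == 0%N :> nat then (l (k%:Z + n - (i.+1)%:Z))%:~R
     else \sum_(t < k - j) (l (n - (i.+1)%:Z + (j.+1)%:Z - 1 + t%:Z))%:~R).

(* Main.v *)
Require Import Defs.
From HB Require Import structures.
From mathcomp Require Import all_boot all_order all_algebra.
From mathcomp Require Import zify ring.
Import GRing.Theory Num.Theory.
Local Open Scope ring_scope.

Section Aux.
Variable (k : nat) (l : int -> int).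
Hypothesis (rec : forall n : int, l (n + k%:Z) = \sum_(t < k) l (n + t%:Z)).

Let lr (m : int) : rat := (l m)%:~R.

Lemma recr (n : int) : lr (n + k%:Z) = \sum_(t < k) lr (n + t%:Z).
Proof. by rewrite /lr rec rmorph_sum. Qed.

Lemma rec' (m : int) : \sum_(r < k) lr (m - r%:Z) = lr (m + 1).
Proof.
have -> : m + 1 = (m + 1 - k%:Z) + k%:Z by ring.
rewrite recr (reindex_inj rev_ord_inj) /=.
apply: eq_bigr => i _; congr lr.
have := ltn_ord i; lia.
Qed.

Definition ee (j : nat) (m : int) : rat :=
  if j == 0%N then lr (k%:Z + m - 1)
  else \sum_(t < k - j) lr (m + j%:Z - 1 + t%:Z).

Lemma L_entry n (i j : 'I_k) : lucas_mx k l n i j = ee j (n - i%:Z).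
Proof.
rewrite mxE /ee; case: eqP => _.
  by rewrite /lr; congr (l _)%:~R; lia.
by apply: eq_bigr => t _; rewrite /lr; congr (l _)%:~R; lia.
Qed.

Lemma eeA j m : \sum_(r < k) ee j (m - r%:Z) = ee j (m + 1).
Proof.
rewrite /ee; case: eqP => _.
  rewrite (eq_bigr (fun r : 'I_k => lr ((k%:Z + m - 1) - r%:Z))).
    by rewrite rec'; congr lr; ring.
  by move=> r _; congr lr; ring.
rewrite exchange_big /=; apply: eq_bigr => t _.
rewrite (eq_bigr (fun r : 'I_k => lr ((m + j%:Z - 1 + t%:Z) - r%:Z))).
  by rewrite rec'; congr lr; ring.
by move=> r _; congr lr; ring.
Qed.

Lemma eeB j m : (2 <= k)%N -> (j < k)%N ->
  ee 0 m + (if (j.+1 < k)%N then ee j.+1 m else 0) = ee j (m + 1).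
Proof.
move=> k2 jk; rewrite /ee /=.
have Ek : (k - j = (k - j.+1).+1)%N by lia.
case: eqP => [->|j0].
  rewrite k2 -[RHS]/(lr (k%:Z + (m + 1) - 1)).
  have -> : k%:Z + (m + 1) - 1 = m + k%:Z by ring.
  rewrite recr.
  have [k1 Hk1] : exists k1, k = k1.+1 by exists k.-1; lia.
  rewrite Hk1 subSS subn0 big_ord_recr /= addrC; congr (_ + _).
    by congr lr; lia.
  by apply: eq_bigr => t _; congr lr; lia.
rewrite Ek big_ord_recr /= addrC; congr (_ + _); first by congr lr; lia.
case: ifP => hj.
  by apply: eq_bigr => t _; congr lr; lia.
have -> : (k - j.+1 = 0)%N by lia.
by rewrite big_ord0.
Qed.


Definition Qm : 'M[rat]_k :=
  \matrix_(i < k, j < k) ((i == 0%N :> nat) || (i == j.+1 :> nat))%:R.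

Lemma sum_pick N (F : nat -> rat) p :
  \sum_(r < N) ((r : nat) == p)%:R * F r = if (p < N)%N then F p else 0.
Proof.
elim: N => [|N IH]; first by rewrite big_ord0.
rewrite big_ord_recr /= IH.
case: eqP => /= h2.
  by rewrite h2 ltnn ltnSn mul1r add0r.
rewrite mul0r addr0; case: ifP; case: ifP => //; lia.
Qed.

Lemma QL n : Qm *m lucas_mx k l n = lucas_mx k l (n + 1).
Proof.
apply/matrixP => i j; rewrite [RHS]L_entry [LHS]mxE.
case: i => [[|i] hi] /=.
  rewrite (eq_bigr (fun r : 'I_k => ee j (n - r%:Z))).
    by rewrite eeA subr0.
  by move=> r _; rewrite [Qm _ _]mxE L_entry /= mul1r.
rewrite (eq_bigr (fun r : 'I_k => ((r : nat) == i)%:R * ee j (n - r%:Z))).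
  rewrite (sum_pick _ (fun r : nat => ee j (n - r%:Z))) ltnW //; congr ee; lia.
by move=> r _; rewrite [Qm _ _]mxE L_entry /= eqSS eq_sym.
Qed.

Lemma LQ n : (2 <= k)%N -> lucas_mx k l n *m Qm = lucas_mx k l (n + 1).
Proof.
move=> k2; apply/matrixP => i j; rewrite [RHS]L_entry [LHS]mxE.
rewrite (eq_bigr (fun r : 'I_k => ((r : nat) == 0%N)%:R * ee r (n - i%:Z)
   + ((r : nat) == j.+1)%:R * ee r (n - i%:Z))).
  rewrite big_split /= !(sum_pick _ (fun r => ee r (n - i%:Z))).
  rewrite (leq_trans _ k2) // eeB //; congr ee; lia.
move=> r _; rewrite [Qm _ _]mxE L_entry /=.
case: (r : nat) => [|r'] /=; first by rewrite mulr1 mul1r mul0r addr0.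
by rewrite mul0r add0r mulrC.
Qed.

End Aux.
Lemma shiftL k l (rec : forall n : int, l (n + k%:Z) = \sum_(t < k) l (n + t%:Z))
  (k2 : (2 <= k)%N) a b :
  lucas_mx k l (a + 1) *m lucas_mx k l b = lucas_mx k l a *m lucas_mx k l (b + 1).
Proof. by rewrite -(QL _ _ rec) -(LQ _ _ rec a k2) mulmxA. Qed.

Lemma prodH k l (rec : forall n : int, l (n + k%:Z) = \sum_(t < k) l (n + t%:Z))
  (k2 : (2 <= k)%N) n :
  lucas_mx k l n *m lucas_mx k l (- n) = lucas_mx k l 0 *m lucas_mx k l 0.
Proof.
have P : forall m : nat, lucas_mx k l m%:Z *m lucas_mx k l (- m%:Z)
                      = lucas_mx k l 0 *m lucas_mx k l 0.
  elim=> [//|m IH]; rewrite -IH.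
  have -> : (m.+1)%:Z = m%:Z + 1 by lia.
  rewrite shiftL //; congr (_ *m lucas_mx k l _); lia.
have N : forall m : nat, lucas_mx k l (- m%:Z) *m lucas_mx k l m%:Z
                      = lucas_mx k l 0 *m lucas_mx k l 0.
  elim=> [//|m IH]; rewrite -IH.
  have -> : - (m.+1)%:Z = (- (m.+1)%:Z) + 1 - 1 by ring.
  have -> : (m.+1)%:Z = m%:Z + 1 by lia.
  rewrite -shiftL //; congr (lucas_mx k l _ *m _); lia.
case: n => m; first exact: P.
rewrite NegzE opprK; exact: N.
Qed.

Theorem theorem7 (k : nat) (l : int -> int) (n : int) :
  (2 <= k)%N -> is_gen_lucas k l ->
  let H := lucas_mx k l 0 *m lucas_mx k l 0 in
  H \in unitmx ->
  lucas_mx k l n \in unitmx /\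
  invmx (lucas_mx k l n) = lucas_mx k l (- n) *m invmx H.
Proof.
move=> k2 [rec _] H HU.
have E : lucas_mx k l n *m (lucas_mx k l (- n) *m invmx H) = 1%:M.
  by rewrite mulmxA (prodH _ _ rec k2) mulmxV.
have [U _] := mulmx1_unit E.
split=> //.
by rewrite -[LHS]mulmx1 -E mulmxA -mulmxA (mulmxA (invmx _)) mulVmx // mul1mx.
Qed.
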